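(* Assume $p$ is unbounded. Fix $m\ge1$ and positive integers $n_1<n_2<\cdots<n_m$. For each $k\ge1$ let $(r^{(k)}_1,\dots,r^{(k)}_m)$ be an $m$-tuple of positive integers with $\sum_{i=1}^m p_{r^{(k)}_i}>0$, such that $\min_{1\le i\le m}r^{(k)}_i\to\infty$ as $k\to\infty$, and such that for every $1\le j<m$, $$\limsup_{k\to\infty}\frac{r^{(k)}_j}{\min_{j<i\le m}r^{(k)}_i}<\infty.$$ Let $$E_k=\bigcup_{i=1}^m\Big\{M_{n_i}=r^{(k)}_i,\ M_{n_j}<r^{(k)}_j\ \text{for all } 1\le j\le m,\ j\ne i\Big\}.$$ Then, as $k\to\infty$, $$\mathbf{P}[E_k]\sim\sum_{i=1}^m\mu^{n_i}p_{r^{(k)}_i}.$$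
   Context: Let $p=(p_0,p_1,p_2,\dots)$ be a probability distribution on the nonnegative integers with mean $\mu=\sum_k kp_k\in(0,\infty)$, and let $\tau(p)$ be a Galton–Watson tree with offspring distribution $p$: it starts with a single root at generation $0$, and every vertex independently has $k$ children with probability $p_k$. The out-degree of a vertex is its number of children. $M_n$ denotes the maximal out-degree among the vertices of generation $n$ (with $M_n=0$ if generation $n$ is empty). The distribution $p$ is called unbounded if the set $\{r:p_r>0\}$ is unbounded. *)

(* Defs.v *)
From Stdlib Require Import Reals Lra Lia List Classical ClassicalEpsilon.
Import ListNotations.
Open Scope R_scope.

(* A Galton--Watson tree observed up to generation N (the out-degrees of all
   vertices of generations 0..N are recorded).  [gwt d] is a (plane, i.e.
   ordered) tree whose root has "remaining depth" d:
     gwt 0     = nat           (only the out-degree of the vertex is recorded)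
     gwt (S d) = list (gwt d)  (the list of the subtrees rooted at the children;
                                the out-degree is the length of the list). *)
Fixpoint gwt (d : nat) : Type :=
  match d with
  | O => nat
  | S d' => list (gwt d')
  end.

Definition lsum {A : Type} (f : A -> R) (l : list A) : R :=
  fold_right (fun a acc => f a + acc) 0 l.

Definition lprod {A : Type} (f : A -> R) (l : list A) : R :=
  fold_right (fun a acc => f a * acc) 1 l.

Fixpoint weight (p : nat -> R) (d : nat) : gwt d -> R :=
  match d return gwt d -> R with
  | O => fun k => p k
  | S d' => fun l => p (length l) * lprod (weight p d') l
  end.

(* Probability of an event E on the first N generations of tau(p):
   the (countable) sum of the weights of the truncated trees satisfying E,
   defined as the supremum of finite partial sums. *)
Definition Prob (p : nat -> R) (N : nat) (E : gwt N -> Prop) : R :=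
  epsilon (inhabits 0)
    (fun x => is_lub (fun y => exists l : list (gwt N),
                         NoDup l /\ Forall E l /\ y = lsum (weight p N) l) x).

Fixpoint gen_degs (d : nat) : nat -> gwt d -> list nat :=
  match d return nat -> gwt d -> list nat with
  | O => fun n k => match n with O => [k] | S _ => [] end
  | S d' => fun n l => match n with
                       | O => [length l]
                       | S n' => flat_map (gen_degs d' n') l
                       end
  end.

(* M_n : maximal out-degree in generation n (0 if generation n is empty). *)
Definition maxdeg (d n : nat) (t : gwt d) : nat :=
  fold_right Nat.max 0%nat (gen_degs d n t).

Definition sum_lt (m : nat) (f : nat -> R) : R := lsum f (seq 0 m).

(* Main.v *)
Require Import Defs.
From Stdlib Require Import Reals Lra Lia List Classical ClassicalEpsilon.
Import ListNotations.
Open Scope R_scope.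

Lemma lsum_nil {A} (f : A -> R) : lsum f [] = 0.
Proof. reflexivity. Qed.
Lemma lsum_cons {A} (f : A -> R) a l : lsum f (a :: l) = f a + lsum f l.
Proof. reflexivity. Qed.
Lemma lsum_app {A} (f : A -> R) l1 l2 : lsum f (l1 ++ l2) = lsum f l1 + lsum f l2.
Proof. induction l1; simpl; unfold lsum in *; simpl in *; [lra|]. rewrite IHl1; lra. Qed.
Lemma lsum_map {A B} (f : B -> R) (g : A -> B) l : lsum f (map g l) = lsum (fun x => f (g x)) l.
Proof. induction l; [reflexivity|]. cbn [map]. rewrite !lsum_cons, IHl. reflexivity. Qed.
Lemma lsum_flat_map {A B} (f : B -> R) (g : A -> list B) l :
  lsum f (flat_map g l) = lsum (fun x => lsum f (g x)) l.
Proof. induction l; [reflexivity|]. cbn [flat_map]. rewrite lsum_app, lsum_cons, IHl. reflexivity. Qed.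
Lemma lsum_ext_in {A} (f g : A -> R) l : (forall x, In x l -> f x = g x) -> lsum f l = lsum g l.
Proof. induction l; intros H; [reflexivity|]. rewrite !lsum_cons, H, IHl; auto.
  intros; apply H; simpl; auto. simpl; auto. Qed.
Lemma lsum_le_in {A} (f g : A -> R) l : (forall x, In x l -> f x <= g x) -> lsum f l <= lsum g l.
Proof. induction l; intros H; [simpl; unfold lsum; simpl; lra|]. rewrite !lsum_cons.
  assert (f a <= g a) by (apply H; simpl; auto).
  assert (lsum f l <= lsum g l) by (apply IHl; intros; apply H; simpl; auto). lra. Qed.
Lemma lsum_nonneg {A} (f : A -> R) l : (forall x, In x l -> 0 <= f x) -> 0 <= lsum f l.
Proof. intros H. replace 0 with (lsum (fun _ : A => 0) l).
  apply lsum_le_in; intros; apply H; auto. clear H. induction l. reflexivity. rewrite lsum_cons, IHl. lra. Qed.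
Lemma lsum_plus {A} (f g : A -> R) l : lsum (fun x => f x + g x) l = lsum f l + lsum g l.
Proof. induction l; [simpl; unfold lsum; simpl; lra|]. rewrite !lsum_cons, IHl. lra. Qed.
Lemma lsum_scal {A} (c : R) (f : A -> R) l : lsum (fun x => c * f x) l = c * lsum f l.
Proof. induction l; [simpl; unfold lsum; simpl; lra|]. rewrite !lsum_cons, IHl. lra. Qed.
Lemma lsum_zero {A} l : lsum (fun _ : A => 0) l = 0.
Proof. induction l; auto. rewrite lsum_cons, IHl; lra. Qed.
Lemma lsum_const {A} (c : R) l : lsum (fun _ : A => c) l = INR (length l) * c.
Proof. induction l; [simpl; unfold lsum; simpl; lra|]. rewrite lsum_cons, IHl.
  simpl length. rewrite S_INR. lra. Qed.
Lemma lsum_in_le {A} (f : A -> R) l x : (forall y, In y l -> 0 <= f y) -> In x l -> f x <= lsum f l.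
Proof. induction l; intros H Hx; [destruct Hx|]. rewrite lsum_cons. destruct Hx as [<-|Hx].
  - assert (0 <= lsum f l) by (apply lsum_nonneg; intros; apply H; simpl; auto). lra.
  - assert (f x <= lsum f l) by (apply IHl; auto; intros; apply H; simpl; auto).
    assert (0 <= f a) by (apply H; simpl; auto). lra. Qed.
Lemma lsum_pos_ex {A} (f : A -> R) l : 0 < lsum f l -> exists x, In x l /\ 0 < f x.
Proof. induction l; intros H. unfold lsum in H; simpl in H; lra.
  rewrite lsum_cons in H. destruct (Rlt_dec 0 (f a)). exists a; simpl; auto.
  destruct IHl as [x [? ?]]. lra. exists x; simpl; auto. Qed.

Lemma lsum_incl {A} (f : A -> R) (l l' : list A) :
  NoDup l -> incl l l' -> (forall x, In x l' -> 0 <= f x) -> lsum f l <= lsum f l'.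
Proof.
  revert l'. induction l as [|a l IH]; intros l' Hnd Hi Hf.
  - rewrite lsum_nil. apply lsum_nonneg; auto.
  - inversion Hnd; subst. destruct (in_split a l') as [l1 [l2 E]]. apply Hi; simpl; auto.
    subst l'. rewrite lsum_cons, lsum_app, lsum_cons.
    assert (lsum f l <= lsum f (l1 ++ l2)).
    { apply IH; auto. intros x Hx. assert (In x (l1 ++ a :: l2)) by (apply Hi; simpl; auto).
      apply in_app_or in H. apply in_or_app. destruct H as [H|[H|H]]; auto. subst; contradiction.
      intros x Hx. apply Hf. apply in_app_or in Hx. apply in_or_app. destruct Hx; simpl; auto. }
    rewrite lsum_app in H. lra.
Qed.

Lemma lprod_nil {A} (f : A -> R) : lprod f [] = 1.
Proof. reflexivity. Qed.
Lemma lprod_cons {A} (f : A -> R) a l : lprod f (a :: l) = f a * lprod f l.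
Proof. reflexivity. Qed.
Lemma lprod_app {A} (f : A -> R) l1 l2 : lprod f (l1 ++ l2) = lprod f l1 * lprod f l2.
Proof. induction l1; cbn [app]. unfold lprod; simpl; lra. rewrite !lprod_cons, IHl1. lra. Qed.
Lemma lprod_nonneg {A} (f : A -> R) l : (forall x, In x l -> 0 <= f x) -> 0 <= lprod f l.
Proof. induction l; intros H. unfold lprod; simpl; lra. rewrite lprod_cons.
  apply Rmult_le_pos. apply H; simpl; auto. apply IHl; intros; apply H; simpl; auto. Qed.

Lemma NoDup_flat_map {A B} (f : A -> list B) l :
  NoDup l -> (forall x, In x l -> NoDup (f x)) ->
  (forall x y z, In x l -> In y l -> x <> y -> In z (f x) -> ~ In z (f y)) ->
  NoDup (flat_map f l).
Proof.
  induction l as [|a l IH]; intros Hnd H1 H2; simpl. constructor.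
  inversion Hnd; subst. apply NoDup_app. apply H1; simpl; auto.
  apply IH; auto. intros; apply H1; simpl; auto. intros x y z ? ? ? ?; apply (H2 x y z); simpl; auto.
  intros z Hz Hz'. apply in_flat_map in Hz'. destruct Hz' as [y [Hy Hzy]].
  apply (H2 a y z); simpl; auto. intro; subst; contradiction.
Qed.

Lemma app_len_inj {A} (a b c d : list A) : length a = length c -> a ++ b = c ++ d -> a = c /\ b = d.
Proof. revert c. induction a; intros [|x c] Hl He; simpl in *; try lia; auto.
  inversion He; subst. destruct (IHa c) as [-> ->]; auto. Qed.

Fixpoint tuples {A} (k : nat) (L : list A) : list (list A) :=
  match k with
  | O => [[]]
  | S k' => flat_map (fun y => map (cons y) (tuples k' L)) L
  end.

Lemma In_tuples {A} k (L : list A) x : In x (tuples k L) <-> length x = k /\ (forall y, In y x -> In y L).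
Proof.
  revert x. induction k; intros x; simpl.
  - split. intros [<-|[]]. split; auto; intros y []. intros [H _]. destruct x; simpl in H; try lia; auto.
  - rewrite in_flat_map. split.
    + intros [y [Hy Hx]]. apply in_map_iff in Hx. destruct Hx as [x' [<- Hx']].
      apply IHk in Hx'. destruct Hx' as [Hl Hin]. simpl. split; auto. intros z [<-|Hz]; auto.
    + intros [Hl Hin]. destruct x as [|y x']; simpl in Hl; try lia.
      exists y. split. apply Hin; simpl; auto. apply in_map. apply IHk. split; auto.
      intros; apply Hin; simpl; auto.
Qed.

Lemma NoDup_tuples {A} k (L : list A) : NoDup L -> NoDup (tuples k L).
Proof.
  intros HL. induction k; simpl. constructor; [intros []|constructor].
  apply NoDup_flat_map; auto.
  - intros y _. apply NoDup_map_NoDup_ForallPairs; auto. intros a b _ _ H; inversion H; auto.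
  - intros y y' z _ _ Hne Hz Hz'. apply in_map_iff in Hz, Hz'.
    destruct Hz as [a [<- _]]. destruct Hz' as [b [E _]]. inversion E; auto.
Qed.

Lemma lsum_tuples {A} (h : A -> R) k L : lsum (lprod h) (tuples k L) = (lsum h L) ^ k.
Proof.
  induction k. simpl. unfold lsum, lprod; simpl; lra.
  cbn [tuples]. rewrite lsum_flat_map, <- tech_pow_Rmult, <- IHk.
  rewrite Rmult_comm, <- lsum_scal.
  apply lsum_ext_in. intros y _. rewrite lsum_map.
  rewrite Rmult_comm, <- lsum_scal. reflexivity.
Qed.

Lemma lsum_tuples_cnt {A} (h c : A -> R) k L :
  lsum (fun x => lprod h x * lsum c x) (tuples k L) =
  INR k * lsum (fun y => h y * c y) L * (lsum h L) ^ (pred k).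
Proof.
  induction k. simpl. unfold lsum, lprod; simpl; lra.
  cbn [tuples]. rewrite lsum_flat_map.
  transitivity (lsum (fun y => h y * c y * lsum (lprod h) (tuples k L)
                      + h y * lsum (fun x => lprod h x * lsum c x) (tuples k L)) L).
  { apply lsum_ext_in. intros y _. rewrite lsum_map.
    rewrite <- !lsum_scal, <- lsum_plus. apply lsum_ext_in. intros x _.
    rewrite lprod_cons, lsum_cons. ring. }
  rewrite lsum_plus. rewrite lsum_tuples, IHk.
  rewrite (lsum_ext_in (fun y => h y * c y * lsum h L ^ k) (fun y => lsum h L ^ k * (h y * c y))) by (intros; ring).
  rewrite lsum_scal.
  rewrite (lsum_ext_in (fun y => h y * (INR k * lsum (fun y0 => h y0 * c y0) L * lsum h L ^ Init.Nat.pred k))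
     (fun y => (INR k * lsum (fun y0 => h y0 * c y0) L * lsum h L ^ Init.Nat.pred k) * h y)) by (intros; ring).
  rewrite lsum_scal. destruct k. simpl; ring. rewrite S_INR. rewrite (S_INR (S k)), S_INR. simpl pred. rewrite <- (tech_pow_Rmult _ k). ring.
Qed.

Definition shift (u : nat -> nat) : nat -> nat := fun g => u (S g).

Fixpoint LQ (d : nat) : (nat -> nat) -> list (gwt d) :=
  match d return (nat -> nat) -> list (gwt d) with
  | O => fun u => seq 0 (S (u 0%nat))
  | S d' => fun u => flat_map (fun k => tuples k (LQ d' (shift u))) (seq 0 (S (u 0%nat)))
  end.

Lemma gen_degs_S0 d (t : gwt (S d)) : gen_degs (S d) 0 t = [length t].
Proof. reflexivity. Qed.
Lemma gen_degs_SS d g (t : gwt (S d)) : gen_degs (S d) (S g) t = flat_map (gen_degs d g) t.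
Proof. reflexivity. Qed.

Lemma In_LQ d : forall u (t : gwt d),
  In t (LQ d u) <-> (forall g x, In x (gen_degs d g t) -> (x <= u g)%nat).
Proof.
  induction d; intros u t.
  - cbn [LQ]. rewrite in_seq. split.
    + intros H g x Hx. destruct g; simpl in Hx; [|destruct Hx]. destruct Hx as [<-|[]]. lia.
    + intros H. specialize (H 0%nat t). simpl in H. assert (t <= u 0%nat)%nat by (apply H; auto). lia.
  - cbn [LQ]. rewrite in_flat_map. split.
    + intros [k [Hk Ht]]. apply in_seq in Hk. apply In_tuples in Ht. destruct Ht as [Hl Hin].
      intros g x Hx. destruct g.
      * rewrite gen_degs_S0 in Hx. destruct Hx as [<-|[]]. lia.
      * rewrite gen_degs_SS in Hx. apply in_flat_map in Hx. destruct Hx as [c [Hc Hxc]].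
        apply Hin in Hc. apply (IHd (shift u) c) with (g := g); auto.
    + intros H. exists (length t). split.
      * apply in_seq. assert (length t <= u 0%nat)%nat by (apply (H 0%nat); left; auto). lia.
      * apply In_tuples. split; auto. intros c Hc. apply IHd. intros g x Hx.
        apply (H (S g)). rewrite gen_degs_SS. apply in_flat_map. exists c; auto.
Qed.

Lemma NoDup_LQ d : forall u, NoDup (LQ d u).
Proof.
  induction d; intros u; cbn [LQ]. apply seq_NoDup.
  apply NoDup_flat_map. apply seq_NoDup. intros; apply NoDup_tuples; auto.
  intros x y z _ _ Hne Hx Hy. apply In_tuples in Hx, Hy. destruct Hx, Hy. congruence.
Qed.

Fixpoint Wq (p : nat -> R) (d : nat) (u : nat -> nat) : R :=
  match d with
  | O => lsum p (seq 0 (S (u 0%nat)))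
  | S d' => lsum (fun k => p k * (Wq p d' (shift u)) ^ k) (seq 0 (S (u 0%nat)))
  end.

Lemma weight_S p d (l : gwt (S d)) : weight p (S d) l = p (length l) * lprod (weight p d) l.
Proof. reflexivity. Qed.

Lemma sum_LQ p d : forall u, lsum (weight p d) (LQ d u) = Wq p d u.
Proof.
  induction d; intros u. reflexivity.
  cbn [LQ]. cbn [Wq]. rewrite lsum_flat_map. apply lsum_ext_in. intros k _.
  rewrite (lsum_ext_in _ (fun l => p k * lprod (weight p d) l)).
  rewrite lsum_scal, lsum_tuples, IHd. reflexivity.
  intros l Hl. apply In_tuples in Hl. destruct Hl as [Hl _]. rewrite weight_S. subst k. reflexivity.
Qed.

Lemma Wq_bounds p d u : (forall k, 0 <= p k) -> (forall x, lsum p (seq 0 (S x)) <= 1) ->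
  0 <= Wq p d u <= 1.
Proof.
  intros Hp H1. revert u. induction d; intros u; cbn [Wq]. split; auto. apply lsum_nonneg; auto.
  destruct (IHd (shift u)) as [Ha Hb]. split.
  apply lsum_nonneg. intros; apply Rmult_le_pos; auto. apply pow_le; auto.
  eapply Rle_trans; [|apply (H1 (u 0%nat))]. apply lsum_le_in. intros k _.
  assert (Wq p d (shift u) ^ k <= 1). { rewrite <- (pow1 k). apply pow_incr. lra. }
  assert (0 <= p k) by auto. nra.
Qed.

Lemma weight_nonneg p d (t : gwt d) : (forall k, 0 <= p k) -> 0 <= weight p d t.
Proof.
  intros Hp. revert t. induction d; intros t. apply Hp.
  rewrite weight_S. apply Rmult_le_pos; auto. apply lprod_nonneg. intros; auto.
Qed.

Definition cnt d g r (t : gwt d) : R := INR (count_occ Nat.eq_dec (gen_degs d g t) r).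

Lemma cnt_SS d g r (l : gwt (S d)) : cnt (S d) (S g) r l = lsum (cnt d g r) l.
Proof.
  unfold cnt. rewrite gen_degs_SS. induction l. reflexivity.
  cbn [flat_map]. rewrite count_occ_app, plus_INR, lsum_cons, IHl. reflexivity.
Qed.

Lemma lsum_single (l : list nat) r c : NoDup l -> 0 <= c ->
  lsum (fun t => if Nat.eqb t r then c else 0) l <= c.
Proof.
  induction l; intros Hnd Hc. unfold lsum; simpl; lra.
  inversion Hnd; subst. rewrite lsum_cons. destruct (Nat.eqb_spec a r).
  - subst. rewrite (lsum_ext_in _ (fun _ => 0)). rewrite lsum_zero. lra.
    intros x Hx. destruct (Nat.eqb_spec x r); auto. subst; contradiction.
  - specialize (IHl H2 Hc). lra.
Qed.

Lemma ind_eq (p : nat -> R) n r X : p n * X * INR (if Nat.eq_dec n r then 1%nat else 0%nat) = (if Nat.eqb n r then p r else 0) * X.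
Proof. destruct (Nat.eq_dec n r) as [e|e]. subst. rewrite Nat.eqb_refl. simpl. ring.
  apply Nat.eqb_neq in e. rewrite e. simpl. ring. Qed.

Lemma cnt_bound p mu d g r u : (forall k, 0 <= p k) -> (forall x, lsum p (seq 0 (S x)) <= 1) ->
  (forall x, lsum (fun k => INR k * p k) (seq 0 (S x)) <= mu) -> 0 <= mu ->
  lsum (fun t => weight p d t * cnt d g r t) (LQ d u) <= mu ^ g * p r.
Proof.
  intros Hp H1 Hmu Hmu0. revert g u. induction d; intros g u.
  - destruct g.
    + rewrite pow_O, Rmult_1_l. cbn [LQ]. eapply Rle_trans; [|apply (lsum_single (seq 0 (S (u 0%nat))) r (p r))].
      right. apply lsum_ext_in. intros t _. unfold cnt. simpl. destruct (Nat.eq_dec t r); subst.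
      rewrite Nat.eqb_refl. simpl. lra. apply Nat.eqb_neq in n. rewrite n. simpl. lra.
      apply seq_NoDup. auto.
    + rewrite (lsum_ext_in _ (fun _ => 0)). rewrite lsum_zero. apply Rmult_le_pos; auto. apply pow_le; auto.
      intros; unfold cnt; simpl; lra.
  - destruct (Wq_bounds p d (shift u) Hp H1) as [W0 W1].
    destruct g; cbn [LQ]; rewrite lsum_flat_map.
    + rewrite pow_O, Rmult_1_l. eapply Rle_trans; [eapply Rle_trans; [|apply (lsum_single (seq 0 (S (u 0%nat))) r (p r * Wq p d (shift u) ^ r))]|].
      * right. apply lsum_ext_in. intros k _.
        rewrite (lsum_ext_in _ (fun l => (if Nat.eqb k r then p r else 0) * lprod (weight p d) l)).
        rewrite lsum_scal, lsum_tuples, sum_LQ. destruct (Nat.eqb_spec k r); subst; ring.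
        intros l Hl. apply In_tuples in Hl. destruct Hl as [Hl _]. rewrite weight_S. subst k.
        unfold cnt. rewrite gen_degs_S0. simpl. apply ind_eq.
      * apply seq_NoDup.
      * apply Rmult_le_pos; auto. apply pow_le; auto.
      * simpl. assert (Wq p d (shift u) ^ r <= 1). { rewrite <- (pow1 r). apply pow_incr. lra. }
        assert (0 <= p r) by auto. nra.
    + eapply Rle_trans with (lsum (fun k => (INR k * p k) * (mu ^ g * p r)) (seq 0 (S (u 0%nat)))).
      * apply lsum_le_in. intros k _.
        rewrite (lsum_ext_in _ (fun l => p k * (lprod (weight p d) l * lsum (cnt d g r) l))).
        rewrite lsum_scal, lsum_tuples_cnt.
        specialize (IHd g (shift u)).
        assert (0 <= lsum (fun t => weight p d t * cnt d g r t) (LQ d (shift u))).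
        { apply lsum_nonneg. intros t _. apply Rmult_le_pos. apply weight_nonneg; auto. unfold cnt; apply pos_INR. }
        assert (Wq p d (shift u) ^ pred k <= 1). { rewrite <- (pow1 (pred k)). apply pow_incr. lra. }
        assert (0 <= Wq p d (shift u) ^ pred k) by (apply pow_le; auto).
        rewrite sum_LQ. assert (0 <= p k) by auto. assert (0 <= INR k) by apply pos_INR.
        assert (0 <= INR k * p k) by nra.
        set (A := lsum (fun t => weight p d t * cnt d g r t) (LQ d (shift u))) in *.
        set (W := Wq p d (shift u) ^ pred k) in *.
        assert (A * W <= mu ^ g * p r).
        { assert (0 <= mu ^ g * p r) by (apply Rmult_le_pos; auto; apply pow_le; auto). nra. }
        assert (0 <= A * W) by nra. nra.
        intros l Hl. apply In_tuples in Hl. destruct Hl as [Hl _]. rewrite weight_S, cnt_SS. subst k. rewrite Rmult_assoc. reflexivity.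
      * rewrite (lsum_ext_in _ (fun k => (mu ^ g * p r) * (INR k * p k))) by (intros; ring).
        rewrite lsum_scal, <- tech_pow_Rmult. specialize (Hmu (u 0%nat)).
        assert (0 <= mu ^ g * p r) by (apply Rmult_le_pos; auto; apply pow_le; auto). nra.
Qed.

Lemma LQ_bound d u (t : gwt d) g x : In t (LQ d u) -> In x (gen_degs d g t) -> (x <= u g)%nat.
Proof. intros H. apply (proj1 (In_LQ d u t) H). Qed.

Definition ins_tuples {A} (b a : nat) (L1 L2 : list A) : list (list A) :=
  flat_map (fun pre => flat_map (fun y => map (fun post => pre ++ y :: post) (tuples a L2)) L1) (tuples b L2).

Lemma In_ins {A} b a (L1 L2 : list A) t : In t (ins_tuples b a L1 L2) ->
  exists pre y post, t = pre ++ y :: post /\ length pre = b /\ length post = a /\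
    (forall z, In z pre -> In z L2) /\ In y L1 /\ (forall z, In z post -> In z L2).
Proof.
  unfold ins_tuples. intros H. apply in_flat_map in H. destruct H as [pre [Hpre H]].
  apply in_flat_map in H. destruct H as [y [Hy H]]. apply in_map_iff in H.
  destruct H as [post [<- Hpost]]. apply In_tuples in Hpre, Hpost.
  exists pre, y, post. intuition.
Qed.

Lemma NoDup_ins {A} b a (L1 L2 : list A) : NoDup L1 -> NoDup L2 -> NoDup (ins_tuples b a L1 L2).
Proof.
  intros N1 N2. unfold ins_tuples. apply NoDup_flat_map. apply NoDup_tuples; auto.
  - intros pre Hpre. apply NoDup_flat_map; auto.
    + intros y _. apply NoDup_map_NoDup_ForallPairs. intros x1 x2 _ _ E. apply app_inv_head in E. inversion E; auto.
      apply NoDup_tuples; auto.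
    + intros y1 y2 z _ _ Hne H1 H2. apply in_map_iff in H1, H2. destruct H1 as [x1 [<- _]].
      destruct H2 as [x2 [E _]]. apply app_inv_head in E. inversion E; auto.
  - intros pre1 pre2 z H1 H2 Hne Hz Hz'. apply In_tuples in H1, H2.
    apply in_flat_map in Hz. destruct Hz as [y1 [_ Hz]]. apply in_map_iff in Hz. destruct Hz as [x1 [<- _]].
    apply in_flat_map in Hz'. destruct Hz' as [y2 [_ Hz']]. apply in_map_iff in Hz'. destruct Hz' as [x2 [E _]].
    apply app_len_inj in E. destruct E; auto. destruct H1, H2; congruence.
Qed.

Lemma ins_cross {A} (L1 L2 : list A) pre1 y1 post1 pre2 y2 post2 b1 b2 :
  (forall z, In z L1 -> ~ In z L2) ->
  pre1 ++ y1 :: post1 = pre2 ++ y2 :: post2 -> length pre1 = b1 -> length pre2 = b2 -> (b1 < b2)%nat ->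
  In y1 L1 -> (forall z, In z pre2 -> In z L2) -> False.
Proof.
  intros Hd E Hb1 Hb2 Hlt Hy Hpre. assert (Hl : (length pre1 < length pre2)%nat) by lia. clear Hlt.
  assert (H : nth (length pre1) (pre1 ++ y1 :: post1) y1 = nth (length pre1) pre2 y1).
  { rewrite E. apply app_nth1; auto. }
  rewrite nth_middle in H. apply (Hd y1); auto. apply Hpre. rewrite H. apply nth_In; auto.
Qed.

Definition upd (v : nat -> nat) (g x : nat) : nat -> nat := fun h => if Nat.eqb h g then x else v h.

Fixpoint LR (d : nat) : nat -> nat -> (nat -> nat) -> list (gwt d) :=
  match d return nat -> nat -> (nat -> nat) -> list (gwt d) with
  | O => fun g r u => match g with O => [r] | S _ => [] end
  | S d' => fun g r u => match g with
     | O => tuples r (LQ d' (shift u))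
     | S g' => flat_map (fun k => flat_map (fun b =>
                  ins_tuples b (k - 1 - b) (LR d' g' r (shift u)) (LQ d' (upd (shift u) g' (r - 1))))
                  (seq 0 k)) (seq 0 (S (u 0%nat)))
     end
  end.

Lemma LR_S0 d r u : LR (S d) 0 r u = tuples r (LQ d (shift u)).
Proof. reflexivity. Qed.
Lemma LR_SS d g r u : LR (S d) (S g) r u = flat_map (fun k => flat_map (fun b =>
                  ins_tuples b (k - 1 - b) (LR d g r (shift u)) (LQ d (upd (shift u) g (r - 1))))
                  (seq 0 k)) (seq 0 (S (u 0%nat))).
Proof. reflexivity. Qed.

Lemma LR_props d : forall g r u (t : gwt d), In t (LR d g r u) ->
  In r (gen_degs d g t) /\ (forall x, In x (gen_degs d g t) -> (x <= r)%nat) /\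
  (forall h x, h <> g -> In x (gen_degs d h t) -> (x <= u h)%nat).
Proof.
  induction d; intros g r u t Ht.
  - destruct g; simpl in Ht; [|destruct Ht]. destruct Ht as [<-|[]]. simpl. split; auto. split.
    intros x [<-|[]]; lia. intros h x Hh. destruct h; simpl; [lia|intros []].
  - destruct g; [rewrite LR_S0 in Ht|rewrite LR_SS in Ht].
    + apply In_tuples in Ht. destruct Ht as [Hl Hin]. rewrite gen_degs_S0. split. left; auto.
      split. intros x [<-|[]]; lia.
      intros h x Hh Hx. destruct h; [lia|]. rewrite gen_degs_SS in Hx. apply in_flat_map in Hx.
      destruct Hx as [c [Hc Hx]]. apply Hin in Hc. exact (LQ_bound _ _ _ _ _ Hc Hx).
    + apply in_flat_map in Ht. destruct Ht as [k [Hk Ht]]. apply in_flat_map in Ht.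
      destruct Ht as [b [Hb Ht]]. apply In_ins in Ht. destruct Ht as [pre [y [post [E [Hpre [Hpost [Hp1 [Hy Hp2]]]]]]]].
      apply in_seq in Hk, Hb.
      assert (HQ : forall c, In c (pre ++ y :: post) -> c <> y -> In c (LQ d (upd (shift u) g (r - 1)))).
      { intros c Hc Hne. apply in_app_or in Hc. destruct Hc as [Hc|[Hc|Hc]]; auto. congruence. }
      destruct (IHd g r (shift u) y Hy) as [Y1 [Y2 Y3]].
      subst t. split; [|split].
      * rewrite gen_degs_SS. apply in_flat_map. exists y. split; auto. apply in_or_app; simpl; auto.
      * intros x Hx. rewrite gen_degs_SS in Hx. apply in_flat_map in Hx. destruct Hx as [c [Hc Hx]].
        destruct (classic (c = y)) as [->|Hne]; auto.
        apply HQ in Hc; auto. pose proof (LQ_bound _ _ _ _ _ Hc Hx) as Hc'. unfold upd in Hc'.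
        rewrite Nat.eqb_refl in Hc'. lia.
      * intros h x Hh Hx. destruct h.
        -- rewrite gen_degs_S0 in Hx. destruct Hx as [<-|[]]. rewrite length_app. simpl. lia.
        -- rewrite gen_degs_SS in Hx. apply in_flat_map in Hx. destruct Hx as [c [Hc Hx]].
           destruct (classic (c = y)) as [->|Hne]. apply Y3 in Hx; auto.
           apply HQ in Hc; auto. pose proof (LQ_bound _ _ _ _ _ Hc Hx) as Hc'. unfold upd in Hc'.
           assert (Nat.eqb h g = false) by (apply Nat.eqb_neq; lia). rewrite H in Hc'. auto.
Qed.

Lemma LR_disj d g r u (c : gwt d) : (1 <= r)%nat -> In c (LR d g r u) -> ~ In c (LQ d (upd u g (r - 1))).
Proof.
  intros Hr H1 H2. apply LR_props in H1. destruct H1 as [H1 _].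
  pose proof (LQ_bound _ _ _ _ _ H2 H1) as H3. unfold upd in H3. rewrite Nat.eqb_refl in H3. lia.
Qed.

Lemma NoDup_LR d : forall g r u, (1 <= r)%nat -> NoDup (LR d g r u).
Proof.
  induction d; intros g r u Hr.
  - destruct g; simpl. constructor; [intros []|constructor]. constructor.
  - destruct g; [rewrite LR_S0|rewrite LR_SS]. apply NoDup_tuples, NoDup_LQ.
    assert (Hdisj : forall z, In z (LR d g r (shift u)) -> ~ In z (LQ d (upd (shift u) g (r - 1)))).
    { intros z Hz. apply LR_disj; auto. }
    apply NoDup_flat_map. apply seq_NoDup.
    + intros k _. apply NoDup_flat_map. apply seq_NoDup.
      * intros b _. apply NoDup_ins; auto. apply NoDup_LQ.
      * intros b1 b2 z Hb1 Hb2 Hne H1 H2. apply in_seq in Hb1, Hb2.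
        apply In_ins in H1. destruct H1 as [pre1 [y1 [post1 [E1 [L1 [_ [P1 [Y1 _]]]]]]]].
        apply In_ins in H2. destruct H2 as [pre2 [y2 [post2 [E2 [L2 [_ [P2 [Y2 _]]]]]]]].
        subst z. destruct (Nat.lt_ge_cases b1 b2).
        -- exact (ins_cross _ _ _ _ _ _ _ _ _ _ Hdisj E2 L1 L2 H Y1 P2).
        -- assert (b2 < b1)%nat by lia. symmetry in E2.
           exact (ins_cross _ _ _ _ _ _ _ _ _ _ Hdisj E2 L2 L1 H0 Y2 P1).
    + intros k1 k2 z Hk1 Hk2 Hne H1 H2.
      apply in_flat_map in H1. destruct H1 as [b1 [Hb1 H1]]. apply In_ins in H1.
      destruct H1 as [pre1 [y1 [post1 [E1 [L1 [M1 _]]]]]].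
      apply in_flat_map in H2. destruct H2 as [b2 [Hb2 H2]]. apply In_ins in H2.
      destruct H2 as [pre2 [y2 [post2 [E2 [L2 [M2 _]]]]]]. apply in_seq in Hb1, Hb2.
      subst z. apply (f_equal (@length _)) in E2. rewrite !length_app in E2. simpl in E2. lia.
Qed.

Lemma In_ins_len {A} b a (L1 L2 : list A) t : In t (ins_tuples b a L1 L2) -> length t = (b + S a)%nat.
Proof. intros H. apply In_ins in H. destruct H as [pre [y [post [-> [H1 [H2 _]]]]]].
  rewrite length_app. simpl. lia. Qed.

Lemma lsum_ins {A} (h : A -> R) b a L1 L2 :
  lsum (lprod h) (ins_tuples b a L1 L2) = (lsum h L2) ^ b * lsum h L1 * (lsum h L2) ^ a.
Proof.
  unfold ins_tuples. rewrite lsum_flat_map.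
  rewrite (lsum_ext_in _ (fun pre => lprod h pre * (lsum h L1 * lsum h L2 ^ a))).
  rewrite (lsum_ext_in (fun pre => lprod h pre * (lsum h L1 * lsum h L2 ^ a))
             (fun pre => (lsum h L1 * lsum h L2 ^ a) * lprod h pre)) by (intros; ring).
  rewrite lsum_scal, lsum_tuples. ring.
  intros pre _. rewrite lsum_flat_map.
  rewrite (lsum_ext_in _ (fun y => (lprod h pre * h y) * lsum (lprod h) (tuples a L2))).
  rewrite (lsum_ext_in (fun y => (lprod h pre * h y) * lsum (lprod h) (tuples a L2))
     (fun y => (lprod h pre * lsum (lprod h) (tuples a L2)) * h y)) by (intros; ring).
  rewrite lsum_scal, lsum_tuples. ring.
  intros y _. rewrite lsum_map. rewrite <- lsum_scal. apply lsum_ext_in. intros post _.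
  rewrite lprod_app, lprod_cons. ring.
Qed.

Lemma sum_LR_S0 p d r u : lsum (weight p (S d)) (LR (S d) 0 r u) = p r * (Wq p d (shift u)) ^ r.
Proof.
  rewrite LR_S0. rewrite (lsum_ext_in _ (fun l => p r * lprod (weight p d) l)).
  rewrite lsum_scal, lsum_tuples, sum_LQ. reflexivity.
  intros l Hl. apply In_tuples in Hl. destruct Hl as [Hl _]. rewrite weight_S. subst r. reflexivity.
Qed.

Lemma sum_LR_SS p d g r u :
  lsum (weight p (S d)) (LR (S d) (S g) r u) =
  lsum (fun k => p k * INR k * lsum (weight p d) (LR d g r (shift u)) *
                 (Wq p d (upd (shift u) g (r - 1))) ^ (pred k)) (seq 0 (S (u 0%nat))).
Proof.
  rewrite LR_SS, lsum_flat_map. apply lsum_ext_in. intros k _.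
  rewrite lsum_flat_map.
  rewrite (lsum_ext_in _ (fun b => p k * lsum (weight p d) (LR d g r (shift u)) *
                 (Wq p d (upd (shift u) g (r - 1))) ^ (pred k))).
  rewrite lsum_const, length_seq. ring.
  intros b Hb. apply in_seq in Hb.
  rewrite (lsum_ext_in _ (fun l => p k * lprod (weight p d) l)).
  rewrite lsum_scal, lsum_ins, sum_LQ.
  replace (pred k) with (b + (k - 1 - b))%nat by lia. rewrite pow_add. ring.
  intros l Hl. pose proof (In_ins_len _ _ _ _ _ Hl) as E. rewrite weight_S.
  replace k with (b + S (k - 1 - b))%nat by lia. rewrite <- E. reflexivity.
Qed.

Definition Pc (p : nat -> R) x := lsum p (seq 0 (S x)).
Definition SK (p : nat -> R) x := lsum (fun k => INR k * p k) (seq 0 (S x)).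
Definition tlp p x := 1 - Pc p x.
Definition Aq p mu d (u : nat -> nat) := lsum (fun h => mu ^ h * tlp p (u h)) (seq 0 (S d)).
Definition Mu mu d := lsum (fun h => mu ^ h) (seq 0 (S d)).

Lemma bernoulli x k : 0 <= x <= 1 -> 1 - INR k * (1 - x) <= x ^ k.
Proof.
  intros Hx. induction k. simpl. lra. rewrite S_INR. simpl.
  assert (0 <= INR k) by apply pos_INR.
  assert (x * (1 - INR k*(1-x)) <= x * x^k) by (apply Rmult_le_compat_l; lra).
  assert (0 <= INR k * ((1-x)*(1-x))) by (apply Rmult_le_pos; nra). nra.
Qed.

Lemma seq_S0 n : seq 0 (S n) = 0%nat :: map S (seq 0 n).
Proof. simpl. f_equal. symmetry. apply seq_shift. Qed.

Lemma Aq_S p mu d u : Aq p mu (S d) u = tlp p (u 0%nat) + mu * Aq p mu d (shift u).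
Proof.
  unfold Aq. rewrite seq_S0, lsum_cons, lsum_map. simpl pow. rewrite Rmult_1_l.
  f_equal. rewrite <- lsum_scal. apply lsum_ext_in. intros; unfold shift; ring.
Qed.

Lemma tlp_nonneg p x : (forall x, Pc p x <= 1) -> 0 <= tlp p x.
Proof. intros H. unfold tlp. specialize (H x). lra. Qed.

Lemma Aq_nonneg p mu d u : 0 <= mu -> (forall x, Pc p x <= 1) -> 0 <= Aq p mu d u.
Proof. intros. apply lsum_nonneg. intros. apply Rmult_le_pos. apply pow_le; auto. apply tlp_nonneg; auto. Qed.

Lemma Wq_lb p mu d u : (forall k, 0 <= p k) -> (forall x, Pc p x <= 1) ->
  (forall x, SK p x <= mu) -> 0 <= mu -> 1 - Aq p mu d u <= Wq p d u.
Proof.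
  intros Hp H1 Hmu Hmu0. revert u. induction d; intros u.
  - change (Wq p 0 u) with (Pc p (u 0%nat)). unfold Aq. change (seq 0 1) with [0%nat]. rewrite lsum_cons, lsum_nil. unfold tlp. simpl. lra.
  - rewrite Aq_S. cbn [Wq]. specialize (IHd (shift u)).
    destruct (Wq_bounds p d (shift u) Hp H1) as [W0 W1].
    pose proof (Aq_nonneg p mu d (shift u) Hmu0 H1) as A0.
    set (A := Aq p mu d (shift u)) in *. set (W := Wq p d (shift u)) in *.
    apply Rle_trans with (lsum (fun k => p k - A * (INR k * p k)) (seq 0 (S (u 0%nat)))).
    + rewrite (lsum_ext_in _ (fun k => p k + (- A) * (INR k * p k))) by (intros; ring).
      rewrite lsum_plus, lsum_scal. fold (Pc p (u 0%nat)). fold (SK p (u 0%nat)).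
      unfold tlp. specialize (Hmu (u 0%nat)). assert (A * SK p (u 0%nat) <= A * mu) by (apply Rmult_le_compat_l; auto). lra.
    + apply lsum_le_in. intros k _. pose proof (bernoulli W k (conj W0 W1)).
      assert (0 <= p k) by auto. assert (0 <= INR k) by apply pos_INR.
      assert (1 - INR k * A <= W ^ k) by nra.
      assert (p k * (1 - INR k * A) <= p k * W ^ k) by (apply Rmult_le_compat_l; auto). nra.
Qed.

Lemma Aq_le p mu d v tau : 0 <= mu -> (forall x, (x <= d)%nat -> tlp p (v x) <= tau) -> Aq p mu d v <= Mu mu d * tau.
Proof.
  intros Hmu H. unfold Aq, Mu. rewrite Rmult_comm, <- lsum_scal. apply lsum_le_in.
  intros h Hh. apply in_seq in Hh. assert (tlp p (v h) <= tau) by (apply H; lia).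
  assert (0 <= mu ^ h) by (apply pow_le; auto). nra.
Qed.

Lemma Mu_mono mu d : 0 <= mu -> Mu mu d <= Mu mu (S d).
Proof.
  intros H. unfold Mu. rewrite (seq_S (S d)), lsum_app, lsum_cons, lsum_nil.
  assert (0 <= mu ^ (0 + S d)) by (apply pow_le; auto). lra.
Qed.

Lemma Mu_mono_le mu d N : 0 <= mu -> (d <= N)%nat -> Mu mu d <= Mu mu N.
Proof. intros H Hd. induction Hd. lra. eapply Rle_trans; [apply IHHd|apply Mu_mono; auto]. Qed.

Lemma Mu_nonneg mu d : 0 <= mu -> 0 <= Mu mu d.
Proof. intros. apply lsum_nonneg. intros; apply pow_le; auto. Qed.

Lemma seq_incl a b : (a <= b)%nat -> incl (seq 0 a) (seq 0 b).
Proof. intros H x Hx. apply in_seq in Hx. apply in_seq. lia. Qed.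

Lemma tail_part p mu U L : (forall k, 0 <= p k) -> (forall x, SK p x <= mu) ->
  lsum (fun k => INR k * p k * (if Nat.ltb L k then 1 else 0)) (seq 0 (S U)) <= mu - SK p L.
Proof.
  intros Hp Hmu. set (M := Nat.max U L).
  set (f := fun k => INR k * p k * (if Nat.ltb L k then 1 else 0)).
  set (g := fun k => INR k * p k * (1 - if Nat.ltb L k then 1 else 0)).
  assert (Hf : forall k, 0 <= f k). { intros k. unfold f. destruct (Nat.ltb L k); assert (0 <= INR k) by apply pos_INR; assert (0 <= p k) by auto; nra. }
  assert (Hg : forall k, 0 <= g k). { intros k. unfold g. destruct (Nat.ltb L k); assert (0 <= INR k) by apply pos_INR; assert (0 <= p k) by auto; nra. }
  assert (A1 : lsum f (seq 0 (S U)) <= lsum f (seq 0 (S M))).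
  { apply lsum_incl. apply seq_NoDup. apply seq_incl. lia. intros; auto. }
  assert (A2 : lsum g (seq 0 (S L)) <= lsum g (seq 0 (S M))).
  { apply lsum_incl. apply seq_NoDup. apply seq_incl. lia. intros; auto. }
  assert (A3 : lsum f (seq 0 (S M)) + lsum g (seq 0 (S M)) = SK p M).
  { rewrite <- lsum_plus. unfold SK. apply lsum_ext_in. intros; unfold f, g; ring. }
  assert (A4 : lsum g (seq 0 (S L)) = SK p L).
  { unfold SK. apply lsum_ext_in. intros k Hk. apply in_seq in Hk. unfold g.
    assert (Nat.ltb L k = false) by (apply Nat.ltb_ge; lia). rewrite H. ring. }
  specialize (Hmu M). fold f. lra.
Qed.

Lemma level_step p mu x W b L U : (forall k, 0 <= p k) -> (forall x, SK p x <= mu) -> 0 <= mu ->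
  0 <= x -> 0 <= W <= 1 -> 1 - W <= b -> 0 <= b ->
  x * (SK p U - INR L * b * mu - (mu - SK p L)) <=
  lsum (fun k => p k * INR k * x * W ^ (pred k)) (seq 0 (S U)).
Proof.
  intros Hp Hmu Hmu0 Hx HW Hb Hb0.
  assert (HLb : 0 <= INR L * b) by (apply Rmult_le_pos; auto; apply pos_INR).
  apply Rle_trans with (lsum (fun k => x * (1 - INR L * b) * (INR k * p k) +
                                   (- x) * (INR k * p k * (if Nat.ltb L k then 1 else 0))) (seq 0 (S U))).
  - rewrite lsum_plus, !lsum_scal. fold (SK p U).
    pose proof (tail_part p mu U L Hp Hmu).
    assert (x * (INR L * b) * SK p U <= x * (INR L * b) * mu).
    { apply Rmult_le_compat_l. apply Rmult_le_pos; auto. apply Hmu. }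
    assert (x * lsum (fun k => INR k * p k * (if Nat.ltb L k then 1 else 0)) (seq 0 (S U)) <= x * (mu - SK p L)).
    { apply Rmult_le_compat_l; auto. }
    nra.
  - apply lsum_le_in. intros k _.
    assert (HW' : 1 - INR L * b - (if Nat.ltb L k then 1 else 0) <= W ^ pred k).
    { destruct (Nat.ltb_spec L k).
      - assert (0 <= W ^ pred k) by (apply pow_le; lra). lra.
      - pose proof (bernoulli W (pred k) HW).
        assert (INR (pred k) <= INR L) by (apply le_INR; lia).
        assert (0 <= INR (pred k)) by apply pos_INR.
        assert (INR (pred k) * (1 - W) <= INR L * b).
        { apply Rmult_le_compat; lra. }
        lra. }
    assert (0 <= x * (INR k * p k)) by (apply Rmult_le_pos; auto; apply Rmult_le_pos; auto; apply pos_INR).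
    assert (x * (INR k * p k) * (1 - INR L * b - (if Nat.ltb L k then 1 else 0)) <= x * (INR k * p k) * W ^ pred k)
      by (apply Rmult_le_compat_l; auto).
    replace (p k * INR k * x * W ^ pred k) with (x * (INR k * p k) * W ^ pred k) by ring.
    eapply Rle_trans; [|apply H0]. right. ring.
Qed.

Lemma LR_lb p mu eps tau tau' L d : (forall k, 0 <= p k) -> (forall x, Pc p x <= 1) ->
  (forall x, SK p x <= mu) -> 0 <= mu ->
  0 <= eps -> 3 * eps <= mu -> mu - SK p L <= eps -> 0 <= tau -> 0 <= tau' ->
  forall g r u, (g <= d)%nat -> (1 <= r)%nat ->
  (forall h, (h < g)%nat -> mu - SK p (u h) <= eps) ->
  (forall x, (x <= d)%nat -> x <> g -> tlp p (u x) <= tau) -> tlp p (r - 1) <= tau ->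
  INR L * mu * Mu mu d * tau <= eps ->
  (forall x, (g < x)%nat -> (x <= d)%nat -> INR r * tlp p (u x) <= tau') -> Mu mu d * tau' <= eps ->
  p r * (mu - 3 * eps) ^ g * (1 - eps) <= lsum (weight p d) (LR d g r u).
Proof.
  intros Hp H1 Hmu Hmu0 He0 He3 HL Ht0 Ht0'. revert d.
  induction d; intros g r u Hg Hr Hlev Htl Htr HLt Hrt HMt.
  - assert (g = 0%nat) by lia. subst g. simpl LR. rewrite lsum_cons, lsum_nil.
    simpl. assert (0 <= p r) by auto. nra.
  - destruct g.
    + rewrite sum_LR_S0. simpl pow. rewrite Rmult_1_r.
      pose proof (Wq_lb p mu d (shift u) Hp H1 Hmu Hmu0).
      destruct (Wq_bounds p d (shift u) Hp H1) as [W0 W1].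
      pose proof (bernoulli (Wq p d (shift u)) r (conj W0 W1)).
      assert (INR r * Aq p mu d (shift u) <= eps).
      { unfold Aq. rewrite <- lsum_scal. eapply Rle_trans; [|apply Rle_trans with (Mu mu (S d) * tau')]; auto.
        2:{ apply Rmult_le_compat_r; auto. apply Mu_mono; auto. }
        unfold Mu. rewrite Rmult_comm, <- lsum_scal. apply lsum_le_in. intros h Hh. apply in_seq in Hh.
        assert (INR r * tlp p (u (S h)) <= tau') by (apply Hrt; lia).
        assert (0 <= mu ^ h) by (apply pow_le; auto). unfold shift. nra. }
      assert (0 <= INR r) by apply pos_INR.
      assert (1 - eps <= Wq p d (shift u) ^ r) by nra.
      assert (0 <= p r) by auto. nra.
    + rewrite sum_LR_SS.
      set (rho := lsum (weight p d) (LR d g r (shift u))).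
      set (W := Wq p d (upd (shift u) g (r - 1))).
      set (b := Aq p mu d (upd (shift u) g (r - 1))).
      assert (Hrho0 : 0 <= rho). { apply lsum_nonneg. intros; apply weight_nonneg; auto. }
      destruct (Wq_bounds p d (upd (shift u) g (r - 1)) Hp H1) as [W0 W1].
      pose proof (Wq_lb p mu d (upd (shift u) g (r - 1)) Hp H1 Hmu Hmu0) as HWl. fold W b in HWl.
      pose proof (Aq_nonneg p mu d (upd (shift u) g (r - 1)) Hmu0 H1) as Hb0. fold b in Hb0.
      pose proof (level_step p mu rho W b L (u 0%nat) Hp Hmu Hmu0 Hrho0 (conj W0 W1) ltac:(lra) Hb0) as Hstep.
      assert (Hbt : b <= Mu mu d * tau).
      { apply Aq_le; auto. intros x Hx. unfold upd. destruct (Nat.eqb_spec x g). auto.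
        unfold shift. apply Htl; lia. }
      assert (HMd : Mu mu d <= Mu mu (S d)) by (apply Mu_mono; auto).
      assert (HLbm : INR L * b * mu <= eps).
      { assert (0 <= INR L) by apply pos_INR. assert (0 <= INR L * mu) by nra.
        assert (INR L * mu * b <= INR L * mu * (Mu mu (S d) * tau)).
        { apply Rmult_le_compat_l; auto. apply Rle_trans with (Mu mu d * tau); auto.
          apply Rmult_le_compat_r; auto. }
        nra. }
      assert (Hu0 : mu - SK p (u 0%nat) <= eps) by (apply Hlev; lia).
      assert (IH : p r * (mu - 3 * eps) ^ g * (1 - eps) <= rho).
      { apply IHd; auto. lia.
        - intros h Hh. apply Hlev. lia.
        - intros x Hx Hne. apply Htl; lia.
        - assert (0 <= INR L) by apply pos_INR. assert (0 <= INR L * mu) by nra.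
          assert (INR L * mu * Mu mu d * tau <= INR L * mu * Mu mu (S d) * tau).
          { apply Rmult_le_compat_r; auto. apply Rmult_le_compat_l; auto. } lra.
        - intros x Hx1 Hx2. apply Hrt; lia.
        - assert (Mu mu d * tau' <= Mu mu (S d) * tau') by (apply Rmult_le_compat_r; auto). lra. }
      assert (rho * (mu - 3 * eps) <= rho * (SK p (u 0%nat) - INR L * b * mu - (mu - SK p L))).
      { apply Rmult_le_compat_l; auto. lra. }
      rewrite <- tech_pow_Rmult.
      assert (0 <= mu - 3 * eps) by lra.
      assert (p r * (mu - 3 * eps) ^ g * (1 - eps) * (mu - 3 * eps) <= rho * (mu - 3 * eps))
        by (apply Rmult_le_compat_r; auto).
      eapply Rle_trans; [|apply Hstep]. nra.
Qed.

Lemma lsum_seq_sum f n : lsum f (seq 0 (S n)) = sum_f_R0 f n.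
Proof.
  induction n. unfold lsum; simpl; lra.
  rewrite seq_S, lsum_app, IHn, lsum_cons, lsum_nil. simpl. ring.
Qed.

Lemma sum_mono f a b : (forall k, 0 <= f k) -> (a <= b)%nat -> sum_f_R0 f a <= sum_f_R0 f b.
Proof. intros Hf H. induction H. lra. simpl. specialize (Hf (S m)). lra. Qed.

Lemma partial_le f l : (forall k, 0 <= f k) -> infinite_sum f l -> forall n, sum_f_R0 f n <= l.
Proof.
  intros Hf Hs n. destruct (Rle_dec (sum_f_R0 f n) l); auto. exfalso.
  destruct (Hs (sum_f_R0 f n - l)) as [N HN]. lra.
  specialize (HN (Nat.max n N) ltac:(lia)). unfold R_dist in HN.
  pose proof (sum_mono f n (Nat.max n N) Hf ltac:(lia)).
  rewrite Rabs_right in HN; lra.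
Qed.

Lemma partial_tail f l : infinite_sum f l -> forall e, 0 < e -> exists N, forall n, (N <= n)%nat -> l - sum_f_R0 f n <= e.
Proof.
  intros Hs e He. destruct (Hs e He) as [N HN]. exists N. intros n Hn. specialize (HN n Hn).
  unfold R_dist in HN. pose proof (Rle_abs (-(sum_f_R0 f n - l))). rewrite Rabs_Ropp in H. lra.
Qed.

Lemma Pc_S p M : Pc p (S M) = Pc p M + p (S M).
Proof. unfold Pc. rewrite (seq_S (S M)), lsum_app, lsum_cons, lsum_nil. simpl. ring. Qed.
Lemma SK_S p M : SK p (S M) = SK p M + INR (S M) * p (S M).
Proof. unfold SK. rewrite (seq_S (S M)), lsum_app, lsum_cons, lsum_nil. simpl. ring. Qed.

Lemma rtail_partial p r M : (forall k, 0 <= p k) -> (r - 1 <= M)%nat ->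
  INR r * (Pc p M - Pc p (r - 1)) <= SK p M - SK p (r - 1).
Proof.
  intros Hp H. induction H. lra.
  rewrite Pc_S, SK_S. assert (INR r <= INR (S m)) by (apply le_INR; lia).
  assert (INR r * p (S m) <= INR (S m) * p (S m)) by (apply Rmult_le_compat_r; auto). nra.
Qed.

Lemma eps_le a b : (forall d, 0 < d -> a <= b + d) -> a <= b.
Proof. intros H. destruct (Rle_dec a b); auto. specialize (H ((a - b)/2)). lra. Qed.

Lemma Prob_lub p N (E : gwt N -> Prop) B :
  (forall l, NoDup l -> Forall E l -> lsum (weight p N) l <= B) ->
  is_lub (fun y => exists l : list (gwt N), NoDup l /\ Forall E l /\ y = lsum (weight p N) l) (Prob p N E).
Proof.
  intros H. unfold Prob. apply epsilon_spec.
  destruct (completeness (fun y => exists l : list (gwt N), NoDup l /\ Forall E l /\ y = lsum (weight p N) l)) as [x Hx].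
  - exists B. intros y [l [H1 [H2 ->]]]. apply H; auto.
  - exists 0. exists []. split. constructor. split. constructor. reflexivity.
  - exists x; auto.
Qed.

Lemma tree_bound d : forall (t : gwt d), exists K, forall g x, In x (gen_degs d g t) -> (x <= K)%nat.
Proof.
  induction d; intros t.
  - exists t. intros g x Hx. destruct g; simpl in Hx; [destruct Hx as [<-|[]]; lia|destruct Hx].
  - assert (H0 : forall l : list (gwt d), exists K, (length l <= K)%nat /\ forall c, In c l -> forall g x, In x (gen_degs d g c) -> (x <= K)%nat).
    { clear t. intros t. induction t as [|c t IH]. exists 0%nat. split. simpl; lia. intros c []. 
      destruct IH as [K1 [HK1 HK1']]. destruct (IHd c) as [K2 HK2]. exists (Nat.max (S K1) K2).
      split. cbn [length]. lia. intros c' [<-|Hc'] g x Hx. specialize (HK2 g x Hx). lia.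
      specialize (HK1' c' Hc' g x Hx). lia. }
    destruct (H0 t) as [K [HK1 HK2]]. exists K. intros g x Hx. destruct g.
    rewrite gen_degs_S0 in Hx. destruct Hx as [<-|[]]. auto.
    rewrite gen_degs_SS in Hx. apply in_flat_map in Hx. destruct Hx as [c [Hc Hx]]. eapply HK2; eauto.
Qed.

Lemma list_bound d (l : list (gwt d)) : exists K, incl l (LQ d (fun _ => K)).
Proof.
  induction l as [|t l IH]. exists 0%nat. intros x [].
  destruct IH as [K1 HK1]. destruct (tree_bound d t) as [K2 HK2]. exists (Nat.max K1 K2).
  intros x [<-|Hx]. apply In_LQ. intros g y Hy. specialize (HK2 g y Hy). lia.
  apply HK1 in Hx. apply In_LQ. intros g y Hy. pose proof (LQ_bound _ _ _ g y Hx Hy). simpl in H. lia.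
Qed.

Lemma fold_max_in l r : (1 <= r)%nat -> fold_right Nat.max 0%nat l = r -> In r l.
Proof. induction l; simpl; intros H1 H. lia. destruct (Nat.max_spec a (fold_right Nat.max 0%nat l)) as [[_ E]|[_ E]];
  rewrite E in H; auto. Qed.
Lemma fold_max_le l a : (forall x, In x l -> (x <= a)%nat) -> (fold_right Nat.max 0%nat l <= a)%nat.
Proof. induction l; simpl; intros H. lia. assert (a0 <= a)%nat by auto. assert (fold_right Nat.max 0%nat l <= a)%nat by auto. lia. Qed.
Lemma fold_max_eq l r : In r l -> (forall x, In x l -> (x <= r)%nat) -> fold_right Nat.max 0%nat l = r.
Proof. intros H1 H2. apply Nat.le_antisymm. apply fold_max_le; auto.
  clear H2. induction l; simpl in *. destruct H1. destruct H1 as [->|H1]. lia. specialize (IHl H1). lia. Qed.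

Lemma lsum_swap {A B} (f : A -> B -> R) (L : list B) (I : list A) :
  lsum (fun t => lsum (fun i => f i t) I) L = lsum (fun i => lsum (fun t => f i t) L) I.
Proof.
  induction L. rewrite lsum_nil. symmetry. apply lsum_zero.
  rewrite lsum_cons, IHL. rewrite <- lsum_plus. apply lsum_ext_in. intros; rewrite lsum_cons; ring.
Qed.

Definition Ek N m (n rk : nat -> nat) (t : gwt N) : Prop :=
  exists i, (i < m)%nat /\ maxdeg N (n i) t = rk i /\
    (forall j, (j < m)%nat -> j <> i -> (maxdeg N (n j) t < rk j)%nat).

Lemma upper_k p mu N m (n rk : nat -> nat) : (forall k, 0 <= p k) -> (forall x, Pc p x <= 1) ->
  (forall x, SK p x <= mu) -> 0 <= mu -> (forall i, (i < m)%nat -> (1 <= rk i)%nat) ->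
  forall l, NoDup l -> Forall (Ek N m n rk) l ->
  lsum (weight p N) l <= lsum (fun i => mu ^ (n i) * p (rk i)) (seq 0 m).
Proof.
  intros Hp H1 Hmu Hmu0 Hr l Hnd HE. destruct (list_bound N l) as [K HK].
  set (c := fun t => lsum (fun i => cnt N (n i) (rk i) t) (seq 0 m)).
  apply Rle_trans with (lsum (fun t => weight p N t * c t) l).
  { apply lsum_le_in. intros t Ht. rewrite Forall_forall in HE. destruct (HE t Ht) as [i [Hi [Hmax _]]].
    assert (1 <= c t).
    { unfold c. apply Rle_trans with (cnt N (n i) (rk i) t).
      - unfold cnt. apply fold_max_in in Hmax; auto. apply (count_occ_In Nat.eq_dec) in Hmax.
        apply le_INR in Hmax. simpl in Hmax. lra.
      - apply (lsum_in_le (fun i => cnt N (n i) (rk i) t) (seq 0 m) i). intros; apply pos_INR. apply in_seq. lia. }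
    pose proof (weight_nonneg p N t Hp). nra. }
  apply Rle_trans with (lsum (fun t => weight p N t * c t) (LQ N (fun _ => K))).
  { apply lsum_incl; auto. intros. apply Rmult_le_pos. apply weight_nonneg; auto.
    apply lsum_nonneg. intros; apply pos_INR. }
  unfold c. rewrite (lsum_ext_in _ (fun t => lsum (fun i => weight p N t * cnt N (n i) (rk i) t) (seq 0 m)))
    by (intros; rewrite lsum_scal; reflexivity).
  rewrite lsum_swap. apply lsum_le_in. intros i _. apply cnt_bound; auto.
Qed.

Definition thr (n rk : nat -> nat) m K i : nat -> nat := fun g =>
  match find (fun j => andb (Nat.eqb (n j) g) (negb (Nat.eqb j i))) (seq 0 m) with
  | Some j => (rk j - 1)%nat | None => K end.

Lemma thr_cases n rk m K i g : thr n rk m K i g = K \/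
  exists j, (j < m)%nat /\ j <> i /\ n j = g /\ thr n rk m K i g = (rk j - 1)%nat.
Proof.
  unfold thr. destruct (find _ _) eqn:E; auto. right. apply find_some in E. destruct E as [E1 E2].
  apply andb_prop in E2. destruct E2 as [E2 E3]. apply Nat.eqb_eq in E2. apply Bool.negb_true_iff in E3.
  apply Nat.eqb_neq in E3. apply in_seq in E1. exists n0. repeat split; auto; lia.
Qed.

Lemma thr_at n rk m K i j : (forall a b, (a < m)%nat -> (b < m)%nat -> n a = n b -> a = b) ->
  (j < m)%nat -> j <> i -> thr n rk m K i (n j) = (rk j - 1)%nat.
Proof.
  intros Hinj Hj Hji. unfold thr. destruct (find _ _) eqn:E.
  - apply find_some in E. destruct E as [E1 E2]. apply andb_prop in E2. destruct E2 as [E2 _].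
    apply Nat.eqb_eq in E2. apply in_seq in E1. rewrite (Hinj n0 j); auto. lia.
  - exfalso. pose proof (find_none _ _ E j) as H. cbv beta in H. rewrite Nat.eqb_refl in H. simpl in H.
    assert (Nat.eqb j i = false) by (apply Nat.eqb_neq; auto). rewrite H0 in H. simpl in H.
    assert (In j (seq 0 m)) by (apply in_seq; lia). specialize (H H1). discriminate.
Qed.

Lemma lower_k p N m (n rk : nat -> nat) K :
  (forall a b, (a < m)%nat -> (b < m)%nat -> n a = n b -> a = b) ->
  (forall i, (i < m)%nat -> (1 <= rk i)%nat) ->
  exists l, NoDup l /\ Forall (Ek N m n rk) l /\
    lsum (weight p N) l = lsum (fun i => lsum (weight p N) (LR N (n i) (rk i) (thr n rk m K i))) (seq 0 m).
Proof.
  intros Hinj Hr. exists (flat_map (fun i => LR N (n i) (rk i) (thr n rk m K i)) (seq 0 m)).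
  assert (Hprop : forall i t, (i < m)%nat -> In t (LR N (n i) (rk i) (thr n rk m K i)) ->
     maxdeg N (n i) t = rk i /\ forall j, (j < m)%nat -> j <> i -> (maxdeg N (n j) t < rk j)%nat).
  { intros i t Hi Ht. apply LR_props in Ht. destruct Ht as [A1 [A2 A3]]. split.
    - unfold maxdeg. apply fold_max_eq; auto.
    - intros j Hj Hji. unfold maxdeg.
      assert (fold_right Nat.max 0%nat (gen_degs N (n j) t) <= rk j - 1)%nat.
      { apply fold_max_le. intros x Hx. rewrite <- (thr_at n rk m K i j); auto.
        }
      specialize (Hr j Hj). lia. }
  split; [|split].
  - apply NoDup_flat_map. apply seq_NoDup. intros i Hi. apply in_seq in Hi. apply NoDup_LR. apply Hr; lia.
    intros i j t Hi Hj Hne H1 H2. apply in_seq in Hi, Hj.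
    apply LR_props in H1. destruct H1 as [B1 _]. apply LR_props in H2. destruct H2 as [_ [_ B3]].
    assert (n i <> n j) by (intro E; apply Hne; apply Hinj; auto; lia).
    specialize (B3 (n i) (rk i) H B1). rewrite thr_at in B3; auto; try lia.
    specialize (Hr i ltac:(lia)). lia.
  - apply Forall_forall. intros t Ht. apply in_flat_map in Ht. destruct Ht as [i [Hi Ht]].
    apply in_seq in Hi. exists i. split. lia. apply Hprop; auto. lia.
  - apply lsum_flat_map.
Qed.

Lemma common_K (Q : nat -> nat -> Prop) m :
  (forall i, (i < m)%nat -> exists K, forall k, (K <= k)%nat -> Q i k) ->
  exists K, forall k, (K <= k)%nat -> forall i, (i < m)%nat -> Q i k.
Proof.
  induction m; intros H. exists 0%nat. intros; lia.
  destruct IHm as [K1 HK1]. intros; apply H; lia. destruct (H m ltac:(lia)) as [K2 HK2].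
  exists (Nat.max K1 K2). intros k Hk i Hi. destruct (Nat.eq_dec i m). subst. apply HK2; lia.
  apply HK1; lia.
Qed.

Lemma pow_lb mu eps n : 0 < mu -> 0 <= 3 * eps <= mu ->
  mu ^ n * (1 - INR n * (3 * eps / mu)) <= (mu - 3 * eps) ^ n.
Proof.
  intros Hmu He. replace (mu - 3 * eps) with (mu * (1 - 3 * eps / mu)) by (field; lra).
  rewrite Rpow_mult_distr. apply Rmult_le_compat_l. apply pow_le; lra.
  replace (1 - INR n * (3 * eps / mu)) with (1 - INR n * (1 - (1 - 3 * eps / mu))) by ring.
  apply bernoulli. split.
  - assert (3 * eps / mu <= 1). { apply Rmult_le_reg_r with mu; auto. unfold Rdiv. rewrite Rmult_assoc, Rinv_l; lra. }
    lra.
  - assert (0 <= 3 * eps / mu) by (apply Rmult_le_pos; [lra|left; apply Rinv_0_lt_compat; auto]). lra.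
Qed.

Lemma final_factor mu eps dl N n : 0 < mu -> 0 <= eps -> 3 * eps <= mu ->
  INR N * (3 * eps / mu) + eps <= dl -> (n <= N)%nat -> dl <= 1 ->
  (1 - dl) * mu ^ n <= (mu - 3 * eps) ^ n * (1 - eps).
Proof.
  intros Hmu He He3 Hdl Hn Hd1.
  pose proof (pow_lb mu eps n Hmu ltac:(lra)) as Hp.
  assert (Hq : 0 <= 3 * eps / mu) by (apply Rmult_le_pos; [lra|left; apply Rinv_0_lt_compat; auto]).
  assert (INR n <= INR N) by (apply le_INR; auto).
  assert (Ha : INR n * (3 * eps / mu) <= INR N * (3 * eps / mu)) by (apply Rmult_le_compat_r; auto).
  set (a := INR n * (3 * eps / mu)) in *.
  assert (Hmn : 0 <= mu ^ n) by (apply pow_le; lra).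
  assert (0 <= 1 - eps) by (pose proof (pos_INR N); nra).
  assert (mu ^ n * (1 - a) * (1 - eps) <= (mu - 3 * eps) ^ n * (1 - eps)) by (apply Rmult_le_compat_r; auto).
  assert (0 <= a) by (apply Rmult_le_pos; auto; apply pos_INR).
  assert (mu ^ n * (1 - dl) <= mu ^ n * ((1 - a) * (1 - eps))).
  { apply Rmult_le_compat_l; auto. nra. }
  nra.
Qed.

Lemma div_helper a e : 0 <= a -> 0 <= e -> a * (e / (a + 1)) <= e.
Proof.
  intros Ha He. unfold Rdiv. replace (a * (e * / (a + 1))) with (e * (a / (a + 1))) by (field; lra).
  assert (a / (a + 1) <= 1). { apply Rmult_le_reg_r with (a + 1). lra. unfold Rdiv. rewrite Rmult_assoc, Rinv_l; lra. }
  assert (0 <= a / (a + 1)) by (apply Rmult_le_pos; auto; left; apply Rinv_0_lt_compat; lra). nra.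
Qed.

Lemma ratio_close a D dl : 0 < D -> (1 - dl) * D <= a -> a <= D -> Rabs (a / D - 1) <= dl.
Proof.
  intros HD H1 H2. replace (a / D - 1) with ((a - D) / D) by (field; lra).
  unfold Rdiv. rewrite Rabs_mult, Rabs_inv, (Rabs_right D) by lra.
  rewrite Rabs_left1 by lra. apply Rmult_le_reg_r with D; auto. rewrite Rmult_assoc, Rinv_l; lra.
Qed.

Theorem proposition2p4
  (p : nat -> R) (mu : R)
  (hp_nonneg : forall k, 0 <= p k)
  (hp_sum : infinite_sum p 1)
  (hmu : infinite_sum (fun k => INR k * p k) mu)
  (hmu_pos : 0 < mu)
  (hp_unbdd : forall B : nat, exists r : nat, (B <= r)%nat /\ 0 < p r)
  (m : nat) (hm : (1 <= m)%nat)
  (n : nat -> nat)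
  (hn_pos : forall i, (i < m)%nat -> (1 <= n i)%nat)
  (hn_incr : forall i j, (i < j)%nat -> (j < m)%nat -> (n i < n j)%nat)
  (r : nat -> nat -> nat)
  (hr_pos : forall k i, (1 <= k)%nat -> (i < m)%nat -> (1 <= r k i)%nat)
  (hr_sum : forall k, (1 <= k)%nat -> 0 < sum_lt m (fun i => p (r k i)))
  (hr_inf : forall B : nat, exists K : nat, forall k i,
      (K <= k)%nat -> (i < m)%nat -> (B <= r k i)%nat)
  (hr_ratio : forall j, (j + 1 < m)%nat ->
      exists C : R, exists K : nat, forall k i,
        (K <= k)%nat -> (j < i)%nat -> (i < m)%nat ->
        INR (r k j) <= C * INR (r k i)) :
  let N := n (m - 1)%nat in
  Un_cv
    (fun k =>
       Prob p N (fun t =>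
          exists i, (i < m)%nat /\ maxdeg N (n i) t = r k i /\
            (forall j, (j < m)%nat -> j <> i -> (maxdeg N (n j) t < r k j)%nat))
       / sum_lt m (fun i => mu ^ (n i) * p (r k i)))
    1.
Proof.
  intros N. set (Hp := hp_nonneg).
  assert (Hmu0 : 0 <= mu) by lra.
  assert (HPc : forall x, Pc p x <= 1).
  { intros x. unfold Pc. rewrite lsum_seq_sum. apply partial_le; auto. }
  assert (HSK : forall x, SK p x <= mu).
  { intros x. unfold SK. rewrite lsum_seq_sum. apply partial_le; auto.
    intros k; apply Rmult_le_pos; auto; apply pos_INR. }
  assert (Htl0 : forall e, 0 < e -> exists B, forall x, (B <= x)%nat -> tlp p x <= e).
  { intros e He. destruct (partial_tail p 1 hp_sum e He) as [B HB]. exists B. intros x Hx.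
    unfold tlp, Pc. rewrite lsum_seq_sum. apply HB; auto. }
  assert (Htm0 : forall e, 0 < e -> exists B, forall x, (B <= x)%nat -> mu - SK p x <= e).
  { intros e He. destruct (partial_tail _ mu hmu e He) as [B HB]. exists B. intros x Hx.
    unfold SK. rewrite lsum_seq_sum. apply HB; auto. }
  assert (Htlnn : forall x, 0 <= tlp p x) by (intros; apply tlp_nonneg; auto).
  assert (Hrt : forall rr, (1 <= rr)%nat -> INR rr * tlp p (rr - 1) <= mu - SK p (rr - 1)).
  { intros rr Hrr. apply eps_le. intros dd Hdd.
    assert (Hpos : 0 < dd / (INR rr + 1)). { apply Rdiv_lt_0_compat; auto. pose proof (pos_INR rr); lra. }
    destruct (Htl0 _ Hpos) as [B HB]. set (M := Nat.max B (rr - 1)).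
    pose proof (HB M ltac:(lia)). pose proof (rtail_partial p rr M Hp ltac:(lia)).
    pose proof (HSK M). pose proof (pos_INR rr).
    assert (INR rr * tlp p M <= dd).
    { apply Rle_trans with (INR rr * (dd / (INR rr + 1))). apply Rmult_le_compat_l; auto.
      unfold Rdiv. apply Rle_trans with ((INR rr + 1) * (dd * / (INR rr + 1))).
      apply Rmult_le_compat_r; [|lra]. left; apply Rmult_lt_0_compat; auto; apply Rinv_0_lt_compat; lra.
      right. field. lra. }
    unfold tlp in *. nra. }
  assert (Hinj : forall a b, (a < m)%nat -> (b < m)%nat -> n a = n b -> a = b).
  { intros a b Ha Hb E. destruct (Nat.lt_trichotomy a b) as [H|[H|H]]; auto.
    specialize (hn_incr a b H Hb). lia. specialize (hn_incr b a H Ha). lia. }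
  assert (HnN : forall i, (i < m)%nat -> (n i <= N)%nat).
  { intros i Hi. unfold N. destruct (Nat.eq_dec i (m - 1)). subst; lia.
    specialize (hn_incr i (m - 1)%nat ltac:(lia) ltac:(lia)). lia. }

  intros e0 He0.
  set (dl := Rmin (e0 / 2) (1 / 2)).
  assert (Hdl0 : 0 < dl) by (unfold dl; apply Rmin_glb_lt; lra).
  assert (Hdl1 : dl <= 1 / 2) by (unfold dl; apply Rmin_r).
  assert (Hdl2 : dl <= e0 / 2) by (unfold dl; apply Rmin_l).
  pose proof (pos_INR N) as HN0.
  set (Q := 3 * INR N / mu + 1 + 3 / mu).
  assert (HQ0 : 0 < Q).
  { unfold Q. assert (0 <= 3 * INR N / mu) by (apply Rmult_le_pos; [lra|left; apply Rinv_0_lt_compat; auto]).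
    assert (0 < 3 / mu) by (apply Rdiv_lt_0_compat; lra). lra. }
  set (eps := dl / Q).
  assert (Heps0 : 0 < eps) by (apply Rdiv_lt_0_compat; auto).
  assert (HepsQ : eps * Q = dl) by (unfold eps; field; lra).
  assert (Heps_a : INR N * (3 * eps / mu) + eps <= dl).
  { rewrite <- HepsQ. unfold Q. replace (INR N * (3 * eps / mu)) with (eps * (3 * INR N / mu)) by (field; lra).
    assert (0 <= eps * (3 / mu)) by (apply Rmult_le_pos; [lra|]; left; apply Rdiv_lt_0_compat; lra). nra. }
  assert (Heps3 : 3 * eps <= mu).
  { assert (eps * (3 / mu) <= dl).
    { rewrite <- HepsQ. unfold Q.
      assert (0 <= eps * (3 * INR N / mu)) by (apply Rmult_le_pos; [lra|]; apply Rmult_le_pos; [lra|left; apply Rinv_0_lt_compat; auto]). nra. }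
    replace (3 * eps) with (eps * (3 / mu) * mu) by (field; lra). nra. }
  destruct (Htm0 eps Heps0) as [L HL].
  set (MuN := Mu mu N).
  assert (HMu0 : 0 <= MuN) by (apply Mu_nonneg; auto).
  set (tau := eps / (INR L * mu * MuN + 1)).
  assert (HLmu : 0 <= INR L * mu * MuN) by (apply Rmult_le_pos; auto; apply Rmult_le_pos; auto; apply pos_INR).
  assert (Htau0 : 0 < tau) by (apply Rdiv_lt_0_compat; lra).
  assert (HtauL : INR L * mu * MuN * tau <= eps) by (apply div_helper; lra).
  set (tau' := eps / (MuN + 1)).
  assert (Htau'0 : 0 < tau') by (apply Rdiv_lt_0_compat; lra).
  assert (Htau'M : MuN * tau' <= eps) by (apply div_helper; lra).
  destruct (Htm0 eps Heps0) as [B1 HB1].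
  destruct (Htl0 tau Htau0) as [B2 HB2].
  destruct (hr_inf (S (Nat.max B1 B2))) as [KA HKA].
  destruct (common_K (fun i k => forall j, (i < j)%nat -> (j < m)%nat ->
                         INR (r k i) * tlp p (r k j - 1) <= tau') m) as [Kc HKc].
  { intros i Hi. destruct (Compare_dec.lt_dec (i + 1) m) as [Him|Him].
    - destruct (hr_ratio i Him) as [C [Kr HKr]].
      assert (HC0 : 0 < Rabs C + 1) by (pose proof (Rabs_pos C); lra).
      destruct (Htm0 (tau' / (Rabs C + 1)) ltac:(apply Rdiv_lt_0_compat; lra)) as [B3 HB3].
      destruct (hr_inf (S B3)) as [Ki HKi].
      exists (Nat.max (Nat.max Kr Ki) 1). intros k Hk j Hij Hj.
      pose proof (HKr k j ltac:(lia) Hij Hj) as E1.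
      pose proof (HKi k j ltac:(lia) Hj) as E2.
      pose proof (Hrt (r k j) ltac:(lia)) as E3.
      pose proof (HB3 (r k j - 1)%nat ltac:(lia)) as E4.
      pose proof (Htlnn (r k j - 1)%nat) as E5.
      pose proof (pos_INR (r k j)) as E6.
      assert (INR (r k i) * tlp p (r k j - 1) <= C * INR (r k j) * tlp p (r k j - 1))
        by (apply Rmult_le_compat_r; auto).
      assert (C * INR (r k j) <= Rabs C * INR (r k j)) by (apply Rmult_le_compat_r; auto; apply Rle_abs).
      assert (C * INR (r k j) * tlp p (r k j - 1) <= Rabs C * INR (r k j) * tlp p (r k j - 1))
        by (apply Rmult_le_compat_r; auto).
      assert (Rabs C * (INR (r k j) * tlp p (r k j - 1)) <= Rabs C * (tau' / (Rabs C + 1))).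
      { apply Rmult_le_compat_l. apply Rabs_pos. lra. }
      pose proof (div_helper (Rabs C) tau' (Rabs_pos C) ltac:(lra)). nra.
    - exists 0%nat. intros k _ j Hij Hj. lia. }
  exists (Nat.max (Nat.max KA Kc) 1). intros k Hk. unfold R_dist.
  assert (Hk1 : (1 <= k)%nat) by lia.
  assert (Hrk : forall i, (i < m)%nat -> (1 <= r k i)%nat) by (intros; apply hr_pos; auto).
  set (D := sum_lt m (fun i => mu ^ (n i) * p (r k i))).
  assert (HD : 0 < D).
  { destruct (lsum_pos_ex _ _ (hr_sum k Hk1)) as [i [Hi Hpi]].
    apply Rlt_le_trans with (mu ^ n i * p (r k i)).
    apply Rmult_lt_0_compat; auto. apply pow_lt; auto.
    apply (lsum_in_le (fun i => mu ^ n i * p (r k i)) (seq 0 m) i); auto.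
    intros; apply Rmult_le_pos; auto; apply pow_le; auto. }
  change (fun t => exists i, (i < m)%nat /\ maxdeg N (n i) t = r k i /\
            (forall j, (j < m)%nat -> j <> i -> (maxdeg N (n j) t < r k j)%nat))
    with (Ek N m n (r k)).
  pose proof (upper_k p mu N m n (r k) Hp HPc HSK Hmu0 Hrk) as HU.
  pose proof (Prob_lub p N (Ek N m n (r k)) D HU) as Hlub.
  assert (HPle : Prob p N (Ek N m n (r k)) <= D).
  { apply (proj2 Hlub). intros y [l [H1 [H2 ->]]]. apply HU; auto. }
  set (Rs := lsum (fun i => INR (r k i)) (seq 0 m)).
  assert (HRs : 0 <= Rs) by (apply lsum_nonneg; intros; apply pos_INR).
  destruct (Htl0 (tau' / (Rs + 1)) ltac:(apply Rdiv_lt_0_compat; lra)) as [B4 HB4].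
  set (K := Nat.max (Nat.max B1 B2) B4).
  destruct (lower_k p N m n (r k) K Hinj Hrk) as [l [Hnd [HF Hsum]]].
  assert (Hge : lsum (weight p N) l <= Prob p N (Ek N m n (r k))).
  { apply (proj1 Hlub). exists l; auto. }
  assert (Hlow : (1 - dl) * D <= lsum (weight p N) l).
  { rewrite Hsum. unfold D, sum_lt. rewrite <- lsum_scal. apply lsum_le_in. intros i Hi. apply in_seq in Hi.
    destruct Hi as [_ Hi]. simpl in Hi.
    set (u := thr n (r k) m K i).
    assert (Hlb : p (r k i) * (mu - 3 * eps) ^ (n i) * (1 - eps) <= lsum (weight p N) (LR N (n i) (r k i) u)).
    { apply (LR_lb p mu eps tau tau' L N Hp HPc HSK Hmu0 ltac:(lra) ltac:(lra) ltac:(apply HL; lia) ltac:(lra) ltac:(lra) (n i) (r k i) u (HnN i Hi) (Hrk i Hi)).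
      - intros h Hh. destruct (thr_cases n (r k) m K i h) as [E|[j [Hj [_ [_ E]]]]]; unfold u; rewrite E.
        apply HB1; lia. apply HB1. pose proof (HKA k j ltac:(lia) Hj). lia.
      - intros x Hx Hne. destruct (thr_cases n (r k) m K i x) as [E|[j [Hj [_ [_ E]]]]]; unfold u; rewrite E.
        apply HB2; lia. apply HB2. pose proof (HKA k j ltac:(lia) Hj). lia.
      - apply HB2. pose proof (HKA k i ltac:(lia) Hi). lia.
      - exact HtauL.
      - intros x Hx1 Hx2. destruct (thr_cases n (r k) m K i x) as [E|[j [Hj [Hji [Hnj E]]]]]; unfold u; rewrite E.
        + pose proof (HB4 K ltac:(lia)).
          assert (INR (r k i) <= Rs) by (apply (lsum_in_le (fun i => INR (r k i)) (seq 0 m) i); [intros; apply pos_INR|apply in_seq; lia]).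
          pose proof (Htlnn K). pose proof (pos_INR (r k i)).
          pose proof (div_helper Rs tau' HRs ltac:(lra)).
          assert (INR (r k i) * tlp p K <= Rs * (tau' / (Rs + 1))).
          { apply Rmult_le_compat; auto. }
          lra.
        + assert (i < j)%nat.
          { destruct (Nat.lt_trichotomy i j) as [H|[H|H]]; auto. congruence.
            specialize (hn_incr j i H Hi). lia. }
          apply (HKc k ltac:(lia) i Hi j); auto.
      - exact Htau'M. }
    pose proof (final_factor mu eps dl N (n i) hmu_pos ltac:(lra) Heps3 Heps_a (HnN i Hi) ltac:(lra)).
    assert (0 <= p (r k i)) by auto.
    assert (p (r k i) * ((1 - dl) * mu ^ n i) <= p (r k i) * ((mu - 3 * eps) ^ n i * (1 - eps)))
      by (apply Rmult_le_compat_l; auto).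
    nra. }
  pose proof (ratio_close (Prob p N (Ek N m n (r k))) D dl HD ltac:(lra) HPle). lra.
Qed.
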